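(* Let $A$ be a commutative ring and $\sigma$ a hereditary torsion theory on $A$-modules such that $A$ is totally $\sigma$-artinian. Then every prime ideal $\mathfrak{p}\in\mathcal{K}(\sigma)$ is a minimal prime ideal of $A$. Consequently $\mathcal{K}(\sigma)=\mathcal{C}(\sigma)$.
   Context: $\mathcal{L}(\sigma)$ is the Gabriel filter of $\sigma$. $A$ is totally $\sigma$-artinian if for every descending chain of ideals $\mathfrak{a}_1\supseteq\mathfrak{a}_2\supseteq\cdots$ there exist $m$ and $\mathfrak{h}\in\mathcal{L}(\sigma)$ with $\mathfrak{a}_m\mathfrak{h}\subseteq\mathfrak{a}_s$ for all $s\ge m$. $\mathcal{K}(\sigma)$ is the set of prime ideals $\mathfrak{p}$ of $A$ with $\mathfrak{p}\notin\mathcal{L}(\sigma)$ (equivalently $A/\mathfrak{p}$ is $\sigma$-torsionfree), and $\mathcal{C}(\sigma)$ is the set of maximal elements of $\mathcal{K}(\sigma)$ under inclusion. *)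

(* Defs.v *)
From mathcomp Require Import all_boot all_algebra.
Set Implicit Arguments. Unset Strict Implicit. Unset Printing Implicit Defensive.
Import GRing.Theory.
Local Open Scope ring_scope.

Section Ideals.
Variable R : comPzRingType.

Definition is_ideal (I : R -> Prop) : Prop :=
  [/\ I 0, (forall x y, I x -> I y -> I (x + y)) & (forall a x, I x -> I (a * x))].

Definition subideal (I J : R -> Prop) : Prop := forall x, I x -> J x.

Definition is_prime_ideal (P : R -> Prop) : Prop :=
  [/\ is_ideal P, ~ P 1 & (forall a b, P (a * b) -> P a \/ P b)].

Definition is_minimal_prime (P : R -> Prop) : Prop :=
  is_prime_ideal P /\ (forall Q, is_prime_ideal Q -> subideal Q P -> subideal P Q).

Definition ideal_mul (I J : R -> Prop) : R -> Prop :=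
  fun z => exists n (u v : 'I_n -> R),
    [/\ (forall i, I (u i)), (forall i, J (v i)) & z = \sum_(i < n) u i * v i].

Definition ideal_cap (I J : R -> Prop) : R -> Prop := fun x => I x /\ J x.

Definition ideal_colon (I : R -> Prop) (x : R) : R -> Prop := fun y => I (y * x).

(* Gabriel filter (Gabriel topology) of ideals; hereditary torsion theories sigma
   on R-modules correspond bijectively to Gabriel filters L(sigma). *)
Definition gabriel_filter (L : (R -> Prop) -> Prop) : Prop :=
  [/\ (forall I, L I -> is_ideal I),
      L (fun _ => True),
      (forall I J, L I -> is_ideal J -> subideal I J -> L J) &
      [/\ (forall I J, L I -> L J -> L (ideal_cap I J)),
      (forall I x, L I -> L (ideal_colon I x)) &
      (forall I J, is_ideal J -> L I -> (forall x, I x -> L (ideal_colon J x)) -> L J)]].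

Definition totally_artinian (L : (R -> Prop) -> Prop) : Prop :=
  forall a : nat -> (R -> Prop),
    (forall n, is_ideal (a n)) -> (forall n, subideal (a n.+1) (a n)) ->
    exists m, exists2 h, L h &
      forall s, (m <= s)%N -> subideal (ideal_mul (a m) h) (a s).

Definition Kset (L : (R -> Prop) -> Prop) (P : R -> Prop) : Prop :=
  is_prime_ideal P /\ ~ L P.

Definition Cset (L : (R -> Prop) -> Prop) (P : R -> Prop) : Prop :=
  Kset L P /\ (forall Q, Kset L Q -> subideal P Q -> subideal Q P).

End Ideals.

(* Main.v *)
Require Import Defs.
From mathcomp Require Import all_boot all_algebra.
From Stdlib Require Import Classical.
Import GRing.Theory.
Local Open Scope ring_scope.

Lemma prime_pow (R : comPzRingType) (Q : R -> Prop) x z m :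
  is_prime_ideal Q -> Q (x ^+ m * z) -> Q x \/ Q z.
Proof.
move=> [_ _ HQ]; elim: m z => [|m IH] z; first by rewrite expr0 mul1r; right.
rewrite exprS -mulrA => /HQ [|]; [by left | exact: IH].
Qed.

Lemma part1 (R : comPzRingType) (L : (R -> Prop) -> Prop) :
  gabriel_filter L -> totally_artinian L ->
  forall P, Kset L P -> is_minimal_prime P.
Proof.
move=> [_ _ Lup _] TA P [PP nLP]; split => // Q PQ QP x Px.
apply: NNPP => nQx; apply: nLP.
have PQ' := PQ; case: PQ' => [[Q0 QD QM] _ _].
pose a n := fun z => exists q r, Q q /\ z = q + x ^+ n * r.
have Ia : forall n, is_ideal (a n).
  move=> n; split.
  - by exists 0, 0; split => //; rewrite mulr0 addr0.
  - move=> y z [q1 [r1 [Hq1 ->]]] [q2 [r2 [Hq2 ->]]].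
    exists (q1 + q2), (r1 + r2); split; [exact: QD | by rewrite mulrDr addrACA].
  - move=> b y [q [r [Hq ->]]]; exists (b * q), (b * r); split; [exact: QM | by rewrite mulrDr mulrCA].
have Da : forall n, subideal (a n.+1) (a n).
  move=> n y [q [r [Hq ->]]]; exists q, (x * r); split => //.
  by rewrite exprSr -mulrA.
have [m [h Lh Hh]] := TA a Ia Da.
have [IP _ _] := PP.
have [h0 hD hM] := IP.
apply: (Lup h P Lh IP) => y hy.
have : a m.+1 (x ^+ m * y).
  apply: (Hh m.+1 (leqnSn m)).
  exists 1%N, (fun _ => x ^+ m), (fun _ => y); split => //.
  - by move=> _; exists 0, 1; split => //; rewrite mulr1 add0r.
  - by rewrite big_ord1.
move=> [q [r [Hq E]]].
have : Q (x ^+ m * (y - x * r)).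
  have -> : x ^+ m * (y - x * r) = q.
    by rewrite mulrBr E exprSr -mulrA addrK.
  exact: Hq.
move=> /(@prime_pow _ Q x _ m PQ) [//|Hz].
have -> : y = (y - x * r) + r * x by rewrite [r * x]mulrC subrK.
apply: hD; [exact: QP | exact: hM].
Qed.

Theorem mainTheorem15 (R : comPzRingType) (L : (R -> Prop) -> Prop) :
  gabriel_filter L -> totally_artinian L ->
  (forall P, Kset L P -> is_minimal_prime P) /\
  (forall P, Kset L P <-> Cset L P).
Proof.
move=> GL TA; have H1 := @part1 R L GL TA; split => // P; split; last by case.
move=> KP; split => // Q KQ PQ.
have [_ Hmin] := H1 Q KQ; apply: Hmin => //; by case: KP.
Qed.
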